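(* Let $A\subset\mathbb{N}$. Suppose there exist a Følner sequence $\Phi$ in $\mathbb{N}$ and a non-principal ultrafilter $\mathfrak{p}$ on $\mathbb{N}$ such that $\mathsf{d}_\Phi\big((A-n)\cap(A-\mathfrak{p})\big)$ exists for all $n\in\mathbb{N}$ and $$\lim_{n\to\mathfrak{p}}\mathsf{d}_\Phi\big((A-n)\cap(A-\mathfrak{p})\big)>0.$$ Then there exist infinite sets $B,C\subset\mathbb{N}$ such that $B+C\subset A$.
   Context: A Følner sequence in $\mathbb{N}$ is a sequence $\Phi\colon N\mapsto\Phi_N$ of finite non-empty subsets of $\mathbb{N}$ with $|(\Phi_N+m)\triangle\Phi_N|/|\Phi_N|\to0$ for all $m\in\mathbb{N}$. For $E\subset\mathbb{N}$, $\mathsf{d}_\Phi(E)=\lim_{N\to\infty}|E\cap\Phi_N|/|\Phi_N|$ when this limit exists. For $n\in\mathbb{N}$, $A-n=\{m\in\mathbb{N}: m+n\in A\}$, and for an ultrafilter $\mathfrak{p}$ on $\mathbb{N}$, $A-\mathfrak{p}=\{n\in\mathbb{N}: A-n\in\mathfrak{p}\}$. For a bounded function $a\colon\mathbb{N}\to\mathbb{R}$, $\lim_{n\to\mathfrak{p}}a(n)$ denotes the unique $x$ such that $\{n: |a(n)-x|<\epsilon\}\in\mathfrak{p}$ for every $\epsilon>0$. *)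

(* Defs.v *)
From HB Require Import structures.
From mathcomp Require Import all_boot all_order all_algebra finmap.
From mathcomp Require Import all_classical all_reals all_analysis.
From mathcomp Require Import Rstruct Rstruct_topology.
From Stdlib Require Import Rdefinitions.
Set Implicit Arguments. Unset Strict Implicit. Unset Printing Implicit Defensive.
Import Order.TTheory GRing.Theory Num.Theory.
Import numFieldNormedType.Exports.
Local Open Scope classical_set_scope.
Local Open Scope fset_scope.
Local Open Scope ring_scope.

(* Convention: N is modelled by Rocq's nat = {0,1,2,...}. *)

(* A - n = {m | m + n \in A} *)
Definition shiftset (A : set nat) (n : nat) : set nat := [set m | A (m + n)%N].

(* A - p = {n | A - n \in p} for an ultrafilter p *)
Definition ushift (A : set nat) (p : set_system nat) : set nat :=
  [set n | p (shiftset A n)].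

Definition fshift (F : {fset nat}) (m : nat) : {fset nat} :=
  [fset (x + m)%N | x in F].

Definition Folner (Phi : nat -> {fset nat}) : Prop :=
  (forall N, Phi N != fset0) /\
  forall m : nat,
    (fun N => (#|` ((fshift (Phi N) m `\` Phi N) `|` (Phi N `\` fshift (Phi N) m)) |%:R
               / #|` Phi N |%:R : R)) @ \oo --> (0 : R).

Definition dens_ratio (Phi : nat -> {fset nat}) (E : set nat) (N : nat) : R :=
  #|` [fset x in Phi N | x \in E] |%:R / #|` Phi N |%:R.

Definition density_is (Phi : nat -> {fset nat}) (E : set nat) (d : R) : Prop :=
  dens_ratio Phi E @ \oo --> d.

Definition plim_is (p : set_system nat) (a : nat -> R) (x : R) : Prop :=
  forall e : R, 0 < e -> p [set n | `|a n - x| < e].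

Definition nonprincipal (p : set_system nat) : Prop :=
  forall n : nat, p <> principal_filter n.

(* Main.v *)
Require Import Defs.
From HB Require Import structures.
From mathcomp Require Import all_boot all_order all_algebra finmap.
From mathcomp Require Import all_classical all_reals all_analysis.
From mathcomp Require Import Rstruct Rstruct_topology.
From Stdlib Require Import Rdefinitions.
From mathcomp Require Import lra.
Import Order.TTheory GRing.Theory Num.Theory.
Local Open Scope classical_set_scope.
Local Open Scope ring_scope.


Definition cnt (F : {fset nat}) (X : set nat) : nat := #|` [fset x in F | x \in X]%fset|.

Lemma dens_cnt Phi X N : dens_ratio Phi X N = (cnt (Phi N) X)%:R / (#|` Phi N|)%:R.
Proof. by []. Qed.

Lemma cnt_UI F X Y : addn (cnt F (X `|` Y)) (cnt F (X `&` Y)) = addn (cnt F X) (cnt F Y).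
Proof.
rewrite /cnt -(cardfsUI [fset x in F | x \in X]%fset [fset x in F | x \in Y]%fset).
congr addn; congr (#|` _|); apply/fsetP => z; rewrite !inE.
  by rewrite in_setU; case: (z \in F).
by rewrite in_setI; case: (z \in F).
Qed.

Lemma cnt_sub F X Y : X `<=` Y -> leq (cnt F X) (cnt F Y).
Proof.
move=> XY; apply: fsubset_leq_card; apply/fsubsetP => z; rewrite !inE => /andP[-> /=].
by rewrite !in_setE => /XY.
Qed.

Lemma cnt_le F X : leq (cnt F X) #|` F|.
Proof. apply: fsubset_leq_card; apply/fsubsetP => z; rewrite !inE => /andP[-> //]. Qed.

Lemma cnt0 F : cnt F set0 = 0%N.
Proof. rewrite /cnt; apply/eqP; rewrite cardfs_eq0; apply/eqP/fsetP => z; rewrite !inE in_set0 andbF //. Qed.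

Lemma cnt_bound F X M : (forall x, X x -> leq x.+1 M) -> leq (cnt F X) M.
Proof.
move=> XM; have -> : M = #|` [fset x in iota 0 M]%fset| by rewrite card_fseq undup_id ?size_iota // iota_uniq.
apply: fsubset_leq_card; apply/fsubsetP => z; rewrite !inE => /andP[_]; rewrite in_setE => /XM.
by rewrite mem_iota.
Qed.


Lemma r_UI Phi X Y N : dens_ratio Phi (X `|` Y) N + dens_ratio Phi (X `&` Y) N
  = dens_ratio Phi X N + dens_ratio Phi Y N.
Proof. by rewrite !dens_cnt -!mulrDl -!natrD cnt_UI. Qed.

Lemma r_sub Phi X Y N : X `<=` Y -> dens_ratio Phi X N <= dens_ratio Phi Y N.
Proof. by move=> XY; rewrite !dens_cnt ler_wpM2r ?invr_ge0 ?ler0n // ler_nat cnt_sub. Qed.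

Lemma r_ge0 Phi X N : 0 <= dens_ratio Phi X N.
Proof. by rewrite dens_cnt divr_ge0. Qed.

Lemma r_le1 Phi X N : dens_ratio Phi X N <= 1.
Proof.
rewrite dens_cnt; have [->|h] := eqVneq (#|` Phi N|) 0%N; first by rewrite invr0 mulr0.
by rewrite ler_pdivrMr ?mul1r ?ltr0n ?lt0n // ler_nat cnt_le.
Qed.

Lemma r0 Phi N : dens_ratio Phi set0 N = 0.
Proof. by rewrite dens_cnt cnt0 mul0r. Qed.

Lemma r_bound Phi X N M : (forall x, X x -> leq x.+1 M) ->
  dens_ratio Phi X N <= M%:R / (#|` Phi N|)%:R.
Proof. by move=> h; rewrite dens_cnt ler_wpM2r ?invr_ge0 ?ler0n // ler_nat cnt_bound. Qed.

Lemma r_U Phi X Y N : dens_ratio Phi (X `|` Y) N <= dens_ratio Phi X N + dens_ratio Phi Y N.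
Proof. by rewrite -r_UI lerDl r_ge0. Qed.

Lemma pI {p : set_system nat} (pU : UltraFilter p) {X Y} : p X -> p Y -> p (X `&` Y).
Proof. exact: filterI. Qed.

Lemma pS {p : set_system nat} (pU : UltraFilter p) {X Y} : X `<=` Y -> p X -> p Y.
Proof. exact: filterS. Qed.

Lemma pT {p : set_system nat} (pU : UltraFilter p) : p setT.
Proof. exact: filterT. Qed.

Lemma p_ex {p : set_system nat} (pU : UltraFilter p) {X} : p X -> exists x, X x.
Proof. by move=> /filter_ex. Qed.

Lemma p_compl {p : set_system nat} (pU : UltraFilter p) {X} : ~ p X -> p (~` X).
Proof. by move=> h; case: (in_ultra_setVsetC X pU). Qed.

Lemma p_ge {p : set_system nat} (pU : UltraFilter p) : nonprincipal p ->
  forall M, p [set n | leq M n].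
Proof.
move=> np; elim=> [|M IH]; first by apply: (pS pU (X:=setT)) (pT pU).
apply: contrapT => h.
have h2 := p_compl pU h.
have : p [set M].
  have h5 := pI pU IH h2.
  apply: (pS pU _ h5) => n [/= h3 h4]; apply/eqP; rewrite eqn_leq h3 andbT.
  by rewrite leqNgt; apply/negP.
move=> pM; apply: (np M); apply/seteqP; split => W.
  move=> pW; apply/principal_filterP.
  have [y [Wy /= ym]] := p_ex pU (pI pU pW pM); by rewrite -ym.
move=> /principal_filterP WM; apply: (pS pU (X:=[set M])) pM => y /= ->.
exact: WM.
Qed.

Lemma ev_p {p : set_system nat} (pU : UltraFilter p) : nonprincipal p ->
  forall P : set nat, (\forall N \near \oo, P N) -> p P.
Proof.
move=> np P [M _ HM]; apply: (pS pU (X:=[set n | leq M n])) (p_ge pU np M) => n /= h; exact: HM.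
Qed.


Lemma shift_ne (F : {fset nat}) : F != fset0%fset ->
  leq 1 #|` ((fshift F 1 `\` F) `|` (F `\` fshift F 1))%fset|.
Proof.
move=> /fset0Pn [x0 x0F]; rewrite lt0n cardfs_eq0 fsetU_eq0 negb_and fsetD_eq0.
apply/orP; left; apply/negP => /fsubsetP sub.
have H k : addn x0 k \in F.
  elim: k => [|k IH]; first by rewrite addn0.
  by rewrite addnS -addn1; apply: sub; apply: in_imfset.
have := @leq_bigmax_seq _ (enum_fset F) predT (fun x => x) _ (H (\max_(x <- enum_fset F) x).+1) (erefl true).
by rewrite addnS ltnNge leq_addl.
Qed.

Lemma folner_big Phi {p : set_system nat} (pU : UltraFilter p) : nonprincipal p ->
  Folner Phi -> forall K : nat, p [set N | leq K.+1 #|` Phi N|].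
Proof.
move=> np [ne F1] K; apply: (ev_p pU np).
have hz : (0:R) < (K.+1%:R)^-1 by rewrite invr_gt0 ltr0n.
apply: filterS (cvgr_lt _ (F1 1%N) _ hz) => N /= hN.
have n0 : leq 1 #|` Phi N| by rewrite cardfs_gt0 ne.
have : ((#|` Phi N|)%:R : R)^-1 < (K.+1%:R)^-1.
  apply: le_lt_trans hN; rewrite -[X in X <= _]mul1r; apply: ler_wpM2r.
    by rewrite invr_ge0.
  by rewrite ler1n shift_ne.
by rewrite ltf_pV2 ?posrE ?ltr0n // ltr_nat => /ltnW.
Qed.

Lemma unbounded Phi {p : set_system nat} (pU : UltraFilter p) : nonprincipal p ->
  Folner Phi -> forall (X : set nat) (a : R), 0 < a ->
  p [set N | a < dens_ratio Phi X N] -> forall M, exists x, X x /\ leq M x.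
Proof.
move=> np FP X a a0 pX M; apply: contrapT => hne.
have hb : forall x, X x -> leq x.+1 M.
  move=> x Xx; rewrite ltnNge; apply/negP => h; apply: hne; by exists x.
have [K hK] : exists K : nat, M%:R / a < K%:R.
  exists (Num.Def.trunc (M%:R / a)).+1; exact: truncnS_gt.
have := pI pU pX (folner_big Phi pU np FP K).
move=> /(p_ex pU) [N [/= h1 h2]].
have := lt_le_trans h1 (r_bound Phi X N M hb).
apply/negP; rewrite -leNgt.
have n0 : leq 1 #|` Phi N| by apply: leq_trans h2.
rewrite ler_pdivrMr ?ltr0n //.
rewrite ltr_pdivrMr // in hK.
rewrite mulrC; apply: (le_trans (ltW hK)); rewrite ler_wpM2r ?(ltW a0) // ler_nat; exact: ltnW.
Qed.


Definition good Phi (p : set_system nat) A (E : set nat) : Prop :=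
  exists eta : R, 0 < eta /\
    p [set n | p [set N | eta < dens_ratio Phi (shiftset A n `&` E) N]].

Lemma not_good Phi {p : set_system nat} (pU : UltraFilter p) A E :
  ~ good Phi p A E -> forall eps : R, 0 < eps ->
  p [set n | p [set N | dens_ratio Phi (shiftset A n `&` E) N <= eps]].
Proof.
move=> ng eps e0.
have h : ~ p [set n | p [set N | eps < dens_ratio Phi (shiftset A n `&` E) N]].
  by move=> h; apply: ng; exists eps.
apply: (pS pU _ (p_compl pU h)) => n /= hn.
apply: (pS pU _ (p_compl pU hn)) => N /= hN.
by rewrite leNgt; apply/negP.
Qed.

Lemma key Phi {p : set_system nat} (pU : UltraFilter p) A E P :
  good Phi p A E -> p P -> exists c, P c /\ good Phi p A (shiftset A c `&` E).
Proof.
move=> [eta [eta0 G]] pP; apply: contrapT => hne.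
have H : forall c, P c -> forall eps : R, 0 < eps ->
  p [set n | p [set N | dens_ratio Phi (shiftset A n `&` (shiftset A c `&` E)) N <= eps]].
  move=> c Pc; apply: not_good => // hg; apply: hne; by exists c.
have claim : forall k : nat, exists U : set nat,
  p [set N | k%:R * (eta / 2) <= dens_ratio Phi U N] /\
  forall eps : R, 0 < eps ->
    p [set n | p [set N | dens_ratio Phi (U `&` (shiftset A n `&` E)) N <= eps]].
  elim=> [|k [U [hU1 hU2]]].
    exists set0; split.
      by apply: (pS pU _ (pT pU)) => N _ /=; rewrite mul0r r_ge0.
    move=> eps e0; apply: (pS pU _ (pT pU)) => n _ /=.
    by apply: (pS pU _ (pT pU)) => N _ /=; rewrite set0I r0 ltW.
  have e2 : 0 < eta / 2 by rewrite divr_gt0.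
  have [c [[Pc Gc] Sc]] := p_ex pU (pI pU (pI pU pP G) (hU2 _ e2)).
  exists (U `|` (shiftset A c `&` E)); split.
    apply: (pS pU _ (pI pU (pI pU hU1 Gc) Sc)) => N /= [[h1 h2] h3].
    have := r_UI Phi U (shiftset A c `&` E) N.
    move=> hUI.
    rewrite -natr1 mulrDl mul1r.
    move: hUI h1 h2 h3; set t := k%:R * (eta / 2); lra.
  move=> eps e0.
  have e3 : 0 < eps / 2 by rewrite divr_gt0.
  apply: (pS pU _ (pI pU (hU2 _ e3) (H c Pc _ e3))) => n /= [h1 h2].
  apply: (pS pU _ (pI pU h1 h2)) => N /= [g1 g2].
  have sub : (U `|` (shiftset A c `&` E)) `&` (shiftset A n `&` E) `<=`
     (U `&` (shiftset A n `&` E)) `|` (shiftset A n `&` (shiftset A c `&` E)).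
    by move=> m [[Um|[Acm Em]] [Anm Em']]; [left; split=> //; split | right; split => //].
  apply: le_trans (r_sub Phi _ _ N sub) _.
  apply: le_trans (r_U Phi _ _ N) _.
  move: g1 g2; lra.
set k := (Num.Def.trunc (2 / eta)).+1.
have hk : 2 / eta < k%:R by exact: truncnS_gt.
have [U [hU1 _]] := claim k.
have [N /= hN] := p_ex pU hU1.
have := le_trans hN (r_le1 Phi U N).
apply/negP; rewrite -ltNge.
rewrite ltr_pdivrMr // in hk.
move: hk; rewrite mulrA; lra.
Qed.


Definition state := (set nat * set nat * nat * nat)%type.
Definition sE (s : state) := s.1.1.1.
Definition sP (s : state) := s.1.1.2.
Definition sb (s : state) := s.1.2.
Definition sc (s : state) := s.2.

Definition InvS Phi (p : set_system nat) A (s : state) : Prop :=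
  good Phi p A (sE s) /\ p (sP s) /\ sE s `<=` ushift A p.

Definition RelS A (s s' : state) : Prop :=
  sP s (sc s') /\ leq (sc s).+1 (sc s') /\ sE s' = shiftset A (sc s') `&` sE s /\
      sE s' (sb s') /\ leq (sb s).+1 (sb s') /\ sP s' = sP s `&` shiftset A (sb s').

Lemma good_big Phi {p : set_system nat} (pU : UltraFilter p) A E :
  good Phi p A E -> exists eta : R, 0 < eta /\ p [set N | eta < dens_ratio Phi E N].
Proof.
move=> [eta [e0 G]]; exists eta; split => //.
have [n hn] := p_ex pU G.
apply: (pS pU _ hn) => N /= h; apply: lt_le_trans h _; apply: r_sub => m [].
by [].
Qed.

Lemma step Phi {p : set_system nat} (pU : UltraFilter p) A :
  nonprincipal p -> Folner Phi -> forall s, InvS Phi p A s ->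
  exists s', InvS Phi p A s' /\ RelS A s s'.
Proof.
move=> np FP [[[E P] b] c] [gE [pP EL]]; rewrite /sE /sP /= in gE pP EL.
have pP0 := pI pU pP (p_ge pU np c.+1).
have [c' [[Pc' cc'] gE']] := key Phi pU A E _ gE pP0.
have [eta [e0 bigE']] := good_big Phi pU A _ gE'.
have [b' [Eb' bb']] := unbounded Phi pU np FP _ _ e0 bigE' b.+1.
exists (shiftset A c' `&` E, P `&` shiftset A b', b', c'); split.
  split; first exact: gE'.
  split; last by move=> m [_ /EL].
  have [_ /EL hb] := Eb'.
  exact: (pI pU pP hb).
by [].
Qed.

Lemma range_inf (g : nat -> nat) : (forall k, leq (g k).+1 (g k.+1)) -> infinite_set (range g).
Proof.
move=> inc.
have ge : forall k, leq k (g k).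
  by elim=> [//|k IH]; apply: leq_ltn_trans IH (inc k).
move=> /finite_fsetP [X hX].
set M := \max_(x <- enum_fset X) x.
have hin : [set` X] (g M.+1) by rewrite -hX; exists M.+1.
have := @leq_bigmax_seq _ (enum_fset X) predT (fun x => x) _ hin (erefl true).
rewrite -/M => h; have := leq_trans (ge M.+1) h; by rewrite ltnn.
Qed.


Theorem theorem2p2 (A : set nat) :
  (exists (Phi : nat -> {fset nat}) (p : set_system nat),
     Folner Phi /\ UltraFilter p /\ nonprincipal p /\
     exists d : nat -> R,
       (forall n : nat, density_is Phi (shiftset A n `&` ushift A p) (d n)) /\
       exists x : R, plim_is p d x /\ 0 < x) ->
  exists B C : set nat, infinite_set B /\ infinite_set C /\
    (forall b c : nat, B b -> C c -> A (b + c)%N).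
Proof.
move=> [Phi [p [FP [pU [np [d [hd [x [hx x0]]]]]]]]].
set s0 : state := (ushift A p, setT, 0%N, 0%N).
have I0 : InvS Phi p A s0.
  split; last by split; [exact: pT pU|].
  exists (x / 2); split; first by rewrite divr_gt0.
  have x2 : 0 < x / 2 by rewrite divr_gt0.
  apply: (pS pU _ (hx _ x2)) => n /= hn.
  have dn : x / 2 < d n by move: hn; rewrite ltr_norml; lra.
  apply: (ev_p pU np).
  exact: (cvgr_gt _ (hd n) _ dn).
pose S := {s : state | InvS Phi p A s}.
have st : forall s : S, exists s' : S, RelS A (sval s) (sval s').
  move=> [s Is]; have [s' [Is' R']] := step Phi pU A np FP s Is.
  by exists (exist _ s' Is').
have [f hf] := choice st.
pose sq k := sval (iter k f (exist _ s0 I0)).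
have hR : forall k, RelS A (sq k) (sq k.+1) by move=> k; exact: hf.
have Emono : forall k d, sE (sq (addn k d)) `<=` sE (sq k).
  move=> k; elim=> [|d' IH]; first by rewrite addn0.
  have [_ [_ [h _]]] := hR (addn k d').
  by rewrite addnS h => m [_ /IH].
have Pmono : forall k d, sP (sq (addn k d)) `<=` sP (sq k).
  move=> k; elim=> [|d' IH]; first by rewrite addn0.
  have [_ [_ [_ [_ [_ h]]]]] := hR (addn k d').
  by rewrite addnS h => m [/IH].
exists (range (fun k => sb (sq k.+1))), (range (fun k => sc (sq k.+1))).
split.
  by apply: range_inf => k; have [_ [_ [_ [_ [h _]]]]] := hR k.+1.
split.
  by apply: range_inf => k; have [_ [h _]] := hR k.+1.
move=> _ _ [i _ <-] [j _ <-].
have [ij|ji] := leqP j i.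
  have [_ [_ [hE [hb _]]]] := hR i.
  have := Emono j.+1 (subn i.+1 j.+1).
  rewrite subnKC ?ltnS // => /(_ _ hb).
  have [_ [_ [hE' _]]] := hR j.
  by rewrite hE' => -[].
have [hc _] := hR j.
have := Pmono i.+1 (subn j i.+1).
rewrite subnKC // => /(_ _ hc).
have [_ [_ [_ [_ [_ hP]]]]] := hR i.
rewrite hP => -[_]; rewrite /shiftset /= addrC.
by [].
Qed.
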